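(* Let $G$ be a parity game graph, let $h$ be an even number with $h\ge\pi(v)$ for all nodes $v$ of $G$, and let $p_E,p_O$ be integers. The procedure $\textsc{Solve}_E(G,h,p_E,p_O)$ (defined in the context) returns a set $W_E$ such that for every set $S$ of nodes of $G$: (i) if $S$ is a dominion for Even and $|S|\le p_E$, then $S\subseteq W_E$; (ii) if $S$ is a dominion for Odd and $|S|\le p_O$, then $S\cap W_E=\emptyset$.
   Context: A parity game graph consists of a finite directed graph in which every node has at least one successor and there are no self-loops, a labeling of each node $v$ by a positive integer priority $\pi(v)$, and a partition of the nodes into nodes owned by Even ($E$) and nodes owned by Odd ($O$). A play is an infinite path; the owner of the current node chooses a successor. A play $v_1v_2\dots$ satisfies LimsupEven if $\limsup_i\pi(v_i)$ is even, and LimsupOdd otherwise. For a set $S$ of nodes, Safety$(S)$ is the set of plays using only nodes of $S$. A strategy of a player maps each finite path ending in a node of that player to a successor; it is winning for a condition from $v$ if all plays from $v$ consistent with it belong to the condition. A dominion for Even is a set $S$ of nodes such that from every $v\in S$ Even has a winning strategy for LimsupEven $\cap$ Safety$(S)$; a dominion for Odd is defined symmetrically with LimsupOdd. For a set $N$ of nodes and a player $P$, the attractor $\textsc{Atr}_P(G,N)$ is the smallest set of nodes containing $N$, containing every node of $P$ having some successor in it, and containing every node of the opponent of $P$ all of whose successors are in it. For an attractor $A$, $G\setminus A$ denotes the game graph obtained by deleting the nodes of $A$ and all edges incident to them. The procedure $\textsc{Solve}_E(G,h,p_E,p_O)$ is: (1) If $G$ has no nodes or $p_E\le 1$, return $\emptyset$.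 (2) Repeat: $N_h :=$ set of nodes of $G$ of priority $h$; $H := G\setminus \textsc{Atr}_E(G,N_h)$; $W_O := \textsc{Solve}_O(H,h-1,\lfloor p_O/2\rfloor,p_E)$; $G := G\setminus\textsc{Atr}_O(G,W_O)$; until $W_O=\emptyset$. (3) Once: $N_h :=$ nodes of $G$ of priority $h$; $H := G\setminus\textsc{Atr}_E(G,N_h)$; $W_O := \textsc{Solve}_O(H,h-1,p_O,p_E)$; $G := G\setminus\textsc{Atr}_O(G,W_O)$. (4) While $W_O\neq\emptyset$: perform the same body as in step (2). (5) Return the set of nodes of the current $G$. The procedure $\textsc{Solve}_O(G,h,p_O,p_E)$ is obtained from $\textsc{Solve}_E$ by swapping the roles of $E$ and $O$ everywhere (it returns $\emptyset$ if $G$ is empty or $p_O\le 1$, and calls $\textsc{Solve}_E(H,h-1,\lfloor p_E/2\rfloor,p_O)$ or $\textsc{Solve}_E(H,h-1,p_E,p_O)$, using $\textsc{Atr}_O$ to build $H$ and $\textsc{Atr}_E$ to remove returned sets). *)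

(* Defs.v *)
From HB Require Import structures.
From mathcomp Require Import all_boot all_order all_algebra.
Set Implicit Arguments. Unset Strict Implicit. Unset Printing Implicit Defensive.
Import Order.TTheory GRing.Theory Num.Theory.

(* Players are booleans: [true] = Even, [false] = Odd.
   Subgames (the "G" manipulated by the procedure) are node sets U : {set V},
   with the edges of [e] restricted to U. *)

Section ParityGame.
Variables (V : finType) (e : rel V) (own : V -> bool) (pri : V -> nat).

Definition is_play (v : nat -> V) : Prop := forall i, e (v i) (v i.+1).

Definition limsup_is (s : nat -> nat) (m : nat) : Prop :=
  (forall N, exists2 i, N <= i & s i = m) /\
  (exists N, forall i, N <= i -> s i <= m).

Definition LimsupEven (v : nat -> V) : Prop :=
  exists2 m, limsup_is (fun i => pri (v i)) m & ~~ odd m.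
Definition LimsupOdd (v : nat -> V) : Prop :=
  exists2 m, limsup_is (fun i => pri (v i)) m & odd m.

Definition Limsup_of (P : bool) (v : nat -> V) : Prop :=
  if P then LimsupEven v else LimsupOdd v.

Definition Safety (S : {set V}) (v : nat -> V) : Prop := forall i, v i \in S.

Definition is_strategy (P : bool) (sigma : seq V -> V) : Prop :=
  forall x s, path e x s -> own (last x s) = P -> e (last x s) (sigma (x :: s)).

Definition consistent (P : bool) (sigma : seq V -> V) (v : nat -> V) : Prop :=
  forall i, own (v i) = P -> v i.+1 = sigma (mkseq v i.+1).

Definition winning_from (P : bool) (sigma : seq V -> V)
    (cond : (nat -> V) -> Prop) (x : V) : Prop :=
  forall v, is_play v -> v 0 = x -> consistent P sigma v -> cond v.

Definition dominion (P : bool) (S : {set V}) : Prop :=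
  forall x, x \in S -> exists sigma, is_strategy P sigma /\
    winning_from P sigma (fun v => Limsup_of P v /\ Safety S v) x.

Definition attr (P : bool) (U N : {set V}) : {set V} :=
  fixset (fun X : {set V} =>
    (N :&: U) :|:
    [set v in U | if own v == P
                  then [exists w, [&& w \in U, e v w & w \in X]]
                  else [forall w, (w \in U) && e v w ==> (w \in X)]]).

(* solve P h U p q : Solve_E(U,h,p,q) if P = true, Solve_O(U,h,p,q) if P = false;
   p is the budget of player P, q that of the opponent. *)
Fixpoint solve (P : bool) (h : nat) (U : {set V}) (p q : int) {struct h}
    : {set V} :=
  match h with
  | 0 => set0
  | h'.+1 =>
    if (U == set0) || (p <= 1)%R then set0 else
    let step (b : int) (X : {set V}) :=
      let H := X :\: attr P X [set v in X | pri v == h] in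
      let W := solve (~~ P) h' H b p in
      (X :\: attr (~~ P) X W, W) in
    let fix rep (n : nat) (X : {set V}) {struct n} : {set V} :=
      match n with
      | 0 => X
      | n'.+1 => let XW := step (q %/ 2)%Z X in
                 if XW.2 == set0 then XW.1 else rep n' XW.1
      end in
    let U2 := rep #|V|.+1 U in
    let U3W3 := step q U2 in
    if U3W3.2 == set0 then U3W3.1 else rep #|V|.+1 U3W3.1
  end.

Definition SolveE (U : {set V}) (h : nat) (pE pO : int) := solve true h U pE pO.
Definition SolveO (U : {set V}) (h : nat) (pO pE : int) := solve false h U pO pE.

End ParityGame.

(* Main.v *)
Require Import Defs.
From HB Require Import structures.
From mathcomp Require Import all_boot all_order all_algebra.
Import Order.TTheory GRing.Theory Num.Theory.
From mathcomp Require Import zify.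
From Stdlib Require Import Classical ClassicalEpsilon.
Set Implicit Arguments. Unset Strict Implicit. Unset Printing Implicit Defensive.

Module M4.
Section Game.
Variables (V : finType) (e : rel V) (own : V -> bool) (pri : V -> nat).

Definition total (U : {set V}) := forall y, y \in U -> exists z, z \in U /\ e y z.

Definition FA (P : bool) (U N : {set V}) (X : {set V}) : {set V} :=
    (N :&: U) :|:
    [set v in U | if own v == P
                  then [exists w, [&& w \in U, e v w & w \in X]]
                  else [forall w, (w \in U) && e v w ==> (w \in X)]].

Lemma attrE P (U N : {set V}) : attr e own P U N = iter #|V| (FA P U N) set0.
Proof. by []. Qed.

Lemma FA_mono P (U N : {set V}) : {homo FA P U N : X Y / X \subset Y}.
Proof.
move=> X Y /subsetP XY; apply/subsetP => v; rewrite !inE.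
case/orP=> [->//|/andP[vU H]]; apply/orP; right; rewrite vU /=.
case: (own v == P) H.
  by case/existsP=> w /and3P[wU ew wX]; apply/existsP; exists w; rewrite wU ew XY.
move/forallP=> H; apply/forallP=> w; apply/implyP=> /(implyP (H w)); exact: XY.
Qed.

Lemma attr_fix P (U N : {set V}) : FA P U N (attr e own P U N) = attr e own P U N.
Proof. exact: (fixsetK (@FA_mono P U N)). Qed.

Lemma attr_sub P (U N : {set V}) : attr e own P U N \subset U.
Proof.
rewrite -attr_fix; apply/subsetP=> v; rewrite !inE.
by case/orP=> [/andP[]|/andP[]].
Qed.

Lemma attr_N P (U N : {set V}) v : v \in N -> v \in U -> v \in attr e own P U N.
Proof. by move=> vN vU; rewrite -attr_fix !inE vN vU. Qed.

Lemma attr_trap P (U N : {set V}) y z : y \in U -> y \notin attr e own P U N -> own y = P ->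
  z \in U -> e y z -> z \notin attr e own P U N.
Proof.
move=> yU yA oy zU eyz; apply/negP=> zA; move: yA; rewrite -attr_fix !inE yU oy eqxx /=.
by case/norP=> _ /existsPn /(_ z); rewrite zU eyz zA.
Qed.

Lemma attr_esc P (U N : {set V}) y : y \in U -> y \notin attr e own P U N -> own y != P ->
  exists z, [/\ z \in U, e y z & z \notin attr e own P U N].
Proof.
move=> yU yA oy; move: yA; rewrite -{1}attr_fix !inE yU (negbTE oy) /=.
case/norP=> _ /forallPn [z]; rewrite negb_imply => /andP[/andP[zU eyz] zA].
by exists z.
Qed.

Lemma total_diff P (U N : {set V}) : total U -> total (U :\: attr e own P U N).
Proof.
move=> tU y; rewrite inE => /andP[yA yU].
case: (eqVneq (own y) P) => oy.
  case: (tU y yU) => z [zU eyz]; exists z; rewrite inE zU andbT; split=> //.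
  exact: (attr_trap yU yA oy zU eyz).
by case: (attr_esc yU yA oy) => z [zU eyz zA]; exists z; rewrite inE zU zA.
Qed.

Lemma iter_FA_level P (U N : {set V}) k y : y \in iter k.+1 (FA P U N) set0 ->
  (y \in N /\ y \in U) \/
  [/\ y \in U,
      own y = P -> exists z, [/\ z \in U, e y z & z \in iter k (FA P U N) set0] &
      own y != P -> forall z, z \in U -> e y z -> z \in iter k (FA P U N) set0].
Proof.
rewrite /= !inE => /orP[/andP[-> ->]|/andP[yU H]]; first by left.
right; split=> //.
  move=> oy; move: H; rewrite oy eqxx => /existsP[z /and3P[zU ezy zX]]; by exists z.
move=> /negbTE oy; move: H; rewrite oy => /forallP H z zU eyz.
by move: (H z); rewrite zU eyz.
Qed.

Lemma in_attr_iter P (U N : {set V}) y : y \in attr e own P U N ->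
  exists k, y \in iter k.+1 (FA P U N) set0.
Proof.
rewrite attrE; case: #|V| => [|n]; first by rewrite /= inE.
by move=> H; exists n.
Qed.

Lemma attr0 P (U : {set V}) : total U -> attr e own P U set0 = set0.
Proof.
move=> tU; rewrite attrE; elim: #|V| => //= n ->.
apply/setP=> v; rewrite !inE /=; apply/negbTE; rewrite negb_and.
case: (boolP (v \in U)) => //= vU.
case: (own v == P).
  by apply/existsPn=> w; rewrite inE !andbF.
case: (tU v vU) => z [zU evz]; apply/forallPn; exists z; by rewrite zU evz inE.
Qed.

Lemma attr_superset P (U N : {set V}) : N \subset U -> N \subset attr e own P U N.
Proof. by move=> /subsetP NU; apply/subsetP=> v vN; apply: attr_N => //; apply: NU. Qed.


Definition eU (U : {set V}) : rel V := fun a b => [&& a \in U, b \in U & e a b].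

Inductive good (U : {set V}) (P : bool) (sg : seq V -> V) (x : V) : seq V -> Prop :=
| good1 : x \in U -> good U P sg x [:: x]
| goodS : forall l y, good U P sg x l -> eU U (last x l) y ->
          (own (last x l) = P -> y = sg l) -> good U P sg x (rcons l y).

Lemma good_cons (U : {set V}) (P : bool) (sg : seq V -> V) (x : V) l : good U P sg x l -> exists s, l = x :: s.
Proof. by elim=> [_|l' y _ [s ->] _ _]; [exists [::]|exists (rcons s y)]. Qed.

Lemma good_last_in (U : {set V}) (P : bool) (sg : seq V -> V) (x : V) l : good U P sg x l -> last x l \in U.
Proof. by case=> // l' y _ /and3P[_ yU _] _; rewrite last_rcons. Qed.

Lemma good_x_in (U : {set V}) (P : bool) (sg : seq V -> V) (x : V) l : good U P sg x l -> x \in U.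
Proof. by elim. Qed.

Lemma good_rcons_inv (U : {set V}) (P : bool) (sg : seq V -> V) (x : V) l y : good U P sg x (rcons l y) -> l != [::] ->
  [/\ good U P sg x l, eU U (last x l) y & (own (last x l) = P -> y = sg l)].
Proof.
move=> H; move: {-1}(rcons l y) (erefl (rcons l y)) H => m Em H.
case: H Em => [xU|l' y' gl' ed co] Em.
  by case: l Em => [|a [|b l]] //=.
by move/rcons_inj: Em => [E1 E2]; subst.
Qed.

Lemma good_prefix (U : {set V}) (P : bool) (sg : seq V -> V) (x : V) m : good U P sg x m ->
  forall l t, m = l ++ t -> l != [::] -> good U P sg x l.
Proof.
elim=> [xU|l' y gl' IH ed co] l t.
  case: l => [|a [|b l]] //=; case: t => //= -[<-] _; exact: good1.
case/lastP: t => [|t z]; first by rewrite cats0 => <- _; constructor.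
rewrite -rcons_cat => /rcons_inj [El' _] ln0; exact: IH El' ln0.
Qed.

Lemma good_sub (X Y : {set V}) P sg x l : Y \subset X -> good Y P sg x l -> good X P sg x l.
Proof.
move=> /subsetP YX; elim=> [xU|l' y _ IH ed co]; first by constructor; apply: YX.
constructor=> //; move: ed => /and3P[a b c]; by rewrite /eU !YX.
Qed.

Lemma last_mkseq (v : nat -> V) x n : last x (mkseq v n.+1) = v n.
Proof. by rewrite mkseqS last_rcons. Qed.

Lemma good_mkseq_play (U : {set V}) (P : bool) (sg : seq V -> V) (x : V) (v : nat -> V) :
  (forall n, good U P sg x (mkseq v n.+1)) ->
  [/\ v 0 = x, forall i, eU U (v i) (v i.+1) & consistent own P sg v].
Proof.
move=> H; split.
- by case: (good_cons (H 0)) => s /= [].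
- move=> i; move: (H i.+1); rewrite mkseqS => /good_rcons_inv.
  rewrite -(size_eq0) size_mkseq last_mkseq => /(_ isT) [] //.
- move=> i oi; move: (H i.+1); rewrite mkseqS => /good_rcons_inv.
  rewrite -(size_eq0) size_mkseq last_mkseq => /(_ isT) [_ _]; exact.
Qed.

Lemma good_of_play (U : {set V}) (P : bool) (sg : seq V -> V) (x : V) (v : nat -> V) : v 0 = x -> x \in U ->
  (forall i, eU U (v i) (v i.+1)) -> consistent own P sg v ->
  forall n, good U P sg x (mkseq v n.+1).
Proof.
move=> v0 xU ed co; elim=> [|n IH]; first by rewrite (_ : mkseq v 1 = [:: v 0]) // v0; constructor.
rewrite mkseqS; constructor; rewrite ?last_mkseq //; exact: co.
Qed.

Lemma limit (f : seq V -> seq V) (I : seq V -> Prop) (l0 : seq V) (x0 : V) :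
  I l0 -> 0 < size l0 ->
  (forall l, I l -> [/\ I (f l), exists t, f l = l ++ t & size l < size (f l)]) ->
  exists v : nat -> V, forall k, [/\ I (iter k f l0), k < size (iter k f l0) &
     forall i, i < size (iter k f l0) -> v i = nth x0 (iter k f l0) i].
Proof.
move=> I0 s0 Hf.
have HI k : I (iter k f l0) /\ k < size (iter k f l0).
  elim: k => [|k [Ik sk]] //=; case: (Hf _ Ik) => If _ sf; split=> //.
  exact: leq_ltn_trans sf.
have Hpre j k : exists t, iter (j + k) f l0 = iter j f l0 ++ t.
  elim: k => [|k [t Et]]; first by exists [::]; rewrite addn0 cats0.
  rewrite addnS /=; case: (Hf _ (proj1 (HI (j + k)))) => _ [t' ->] _.
  by exists (t ++ t'); rewrite Et catA.
exists (fun i => nth x0 (iter i.+1 f l0) i) => k; case: (HI k) => Ik sk; split=> // i si.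
case: (Hpre i.+1 k) => t1 E1; case: (Hpre k i.+1) => t2 E2.
move: E2; rewrite addnC E1 => E2.
have si1 : i < size (iter i.+1 f l0) by exact: ltnW (proj2 (HI i.+1)).
by have := congr1 (fun s => nth x0 s i) E2; rewrite /= !nth_cat si1 si.
Qed.

Lemma mkseq_take (v : nat -> V) (L : seq V) x0 n : n <= size L ->
  (forall i, i < size L -> v i = nth x0 L i) -> mkseq v n = take n L.
Proof.
move=> nL Hv; apply: (@eq_from_nth _ x0); first by rewrite size_mkseq size_take_min; lia.
move=> i; rewrite size_mkseq => ilt; rewrite nth_mkseq // nth_take //; apply: Hv.
exact: leq_trans nL.
Qed.

Definition Dom (U : {set V}) (P : bool) (S : {set V}) : Prop :=
  S \subset U /\ forall x, x \in S -> exists sg : seq V -> V,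
    [/\ forall l, good U P sg x l -> own (last x l) = P -> eU U (last x l) (sg l),
        forall l, good U P sg x l -> last x l \in S &
        forall v, v 0 = x -> (forall i, eU U (v i) (v i.+1)) ->
                  consistent own P sg v -> Limsup_of pri P v].

Lemma Dom_closed (U : {set V}) P (S : {set V}) y : Dom U P S -> y \in S ->
  (own y = P -> exists z, z \in S /\ eU U y z) /\
  (own y != P -> forall z, eU U y z -> z \in S).
Proof.
move=> [/subsetP SU HS] yS; case: (HS y yS) => sg [Leg Safe _].
have g1 : good U P sg y [:: y] by constructor; apply: SU.
split.
  move=> oy; have ed := Leg _ g1 oy; exists (sg [:: y]); split=> //.
  have g2 : good U P sg y (rcons [:: y] (sg [:: y])) by constructor.
  by move: (Safe _ g2); rewrite last_rcons.
move=> /negbTE oy z ed; have g2 : good U P sg y (rcons [:: y] z).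
  by constructor=> //= H; move: oy; rewrite H eqxx.
by move: (Safe _ g2); rewrite last_rcons.
Qed.

Lemma Dom_small (U : {set V}) P (S : {set V}) : (forall v, ~~ e v v) -> total U -> Dom U P S ->
  (#|S| <= 1)%N -> S = set0.
Proof.
move=> nl tU D cS; apply/setP=> y; rewrite inE; apply/negP=> yS.
have SU : y \in U by move: D => [/subsetP SU _]; apply: SU.
have one z : z \in S -> z = y.
  move=> zS; apply/eqP; apply: contraT => zy.
  have : (1 < #|S|)%N.
    by rewrite (cardD1 y) yS (cardD1 z) !inE zy zS.
  by rewrite ltnNge cS.
case: (Dom_closed D yS) => H1 H2.
case: (eqVneq (own y) P) => oy.
  case: (H1 oy) => z [/one -> /and3P[_ _]]; by rewrite (negbTE (nl y)).
case: (tU y SU) => z [zU eyz].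
have ed : eU U y z by rewrite /eU SU zU eyz.
move: (H2 oy z ed) => /one Ez; move: eyz; rewrite Ez; by rewrite (negbTE (nl y)).
Qed.

Lemma Dom_restrict (X Y : {set V}) P (S : {set V}) : Dom X P S -> Y \subset X ->
  (forall y z, y \in S -> y \in Y -> own y = P -> z \in X -> e y z -> z \in S -> z \in Y) ->
  Dom Y P (S :&: Y).
Proof.
move=> [SX HS] YX Hc; split; first by apply/subsetP=> z; rewrite inE => /andP[].
move=> x; rewrite inE => /andP[xS xY]; case: (HS x xS) => sg [Leg Safe Win].
exists sg; split.
- move=> l gl ol; have gX := good_sub YX gl; move: (Leg _ gX ol) => /and3P[lX zX ezl].
  have lY := good_last_in gl.
  have zS : sg l \in S.
    by move: (Safe _ (goodS gX (Leg _ gX ol) (fun _ => erefl))); rewrite last_rcons.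
  by rewrite /eU lY ezl (Hc _ _ (Safe _ gX) lY ol zX ezl zS).
- by move=> l gl; rewrite inE (Safe _ (good_sub YX gl)) (good_last_in gl).
- move=> v v0 ed co; apply: Win => // i; move: (ed i) => /and3P[a b c].
  by rewrite /eU c (subsetP YX _ a) (subsetP YX _ b).
Qed.

Lemma Dom_attr_disj (X W : {set V}) P (S : {set V}) : Dom X P S -> S :&: W = set0 ->
  S :&: attr e own (~~ P) X W = set0.
Proof.
move=> D SW; apply/setP=> y; rewrite inE in_set0; apply/negP=> /andP[yS].
case/in_attr_iter=> k; move: k.+1 => {}k; elim: k y yS => [|k IH] y yS; first by rewrite inE.
case/iter_FA_level=> [[yW _]|[yX H1 H2]].
  by move/setP: SW => /(_ y); rewrite inE yS yW in_set0.
case: (eqVneq (own y) P) => oy.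
  case: ((Dom_closed D yS).1 oy) => z [zS /and3P[_ zX ez]].
  apply: (IH z zS); apply: H2 => //; by rewrite oy; case: (P).
have oy' : own y = ~~ P by move: oy; case: (own y); case: (P).
case: (H1 oy') => z [zX ez zk]; apply: (IH z _ zk).
by apply: ((Dom_closed D yS).2 oy); rewrite /eU yX zX ez.
Qed.


Definition pb (Pr : Prop) : bool := if excluded_middle_informative Pr then true else false.
Lemma pbP (Pr : Prop) : reflect Pr (pb Pr).
Proof. by rewrite /pb; case: excluded_middle_informative => H; constructor. Qed.

Lemma good_path (U : {set V}) P sg x l : good U P sg x l -> exists s, l = x :: s /\ path (eU U) x s.
Proof.
elim=> [_|l' y _ [s [-> ps]] ed _]; first by exists [::].
by exists (rcons s y); split=> //; rewrite rcons_path ps.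
Qed.

Lemma chain_play (U : {set V}) P sg x (f : seq V -> seq V) l0 :
  good U P sg x l0 ->
  (forall l, good U P sg x l -> [/\ good U P sg x (f l), exists t, f l = l ++ t & size l < size (f l)]) ->
  exists v : nat -> V, [/\ v 0 = x, forall i, eU U (v i) (v i.+1), consistent own P sg v &
    forall k, [/\ good U P sg x (iter k f l0), k < size (iter k f l0) &
     forall i, i < size (iter k f l0) -> v i = nth x (iter k f l0) i]].
Proof.
move=> g0 Hf.
have s0 : 0 < size l0 by case: (good_cons g0) => s ->.
case: (limit x g0 s0 Hf) => v Hv; exists v.
suff Hg : forall n, good U P sg x (mkseq v n.+1).
  by case: (good_mkseq_play Hg) => a b c; split.
move=> n; case: (Hv n.+1) => gL sL vL.
rewrite (mkseq_take (ltnW sL) vL).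
apply: (good_prefix gL (esym (cat_take_drop n.+1 _))).
by rewrite -size_eq0 size_take_min (minn_idPl (ltnW sL)).
Qed.

Lemma limsup_h (s : nat -> nat) h m : (forall i, s i <= h) ->
  (forall M, exists i, M <= i /\ s i = h) -> limsup_is s m -> m = h.
Proof.
move=> sh inf [inf' [N HN]]; case: (inf' 0) => i _ si.
case: (inf N) => j [Nj sj]; move: (HN j Nj); rewrite sj => hm.
by apply/eqP; rewrite eqn_leq hm -si sh.
Qed.

Lemma limsup_shift (s : nat -> nat) m k : limsup_is s m -> limsup_is (fun i => s (i + k)) m.
Proof.
move=> [inf [N HN]]; split.
  move=> M; case: (inf (M + k)) => i Mi si; exists (i - k); first by lia.
  by rewrite subnK //; lia.
by exists N => i Ni; apply: HN; lia.
Qed.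

Lemma Limsup_shift P (v : nat -> V) k : Limsup_of pri P v -> Limsup_of pri P (fun i => v (i + k)).
Proof.
rewrite /Limsup_of /LimsupEven /LimsupOdd.
by case: P => -[m lm pm]; exists m => //; apply: (limsup_shift k lm).
Qed.

Lemma Dom_of_dominion P (S : {set V}) : (forall v, exists w, e v w) ->
  dominion e own pri P S -> Dom setT P S.
Proof.
move=> Hs D; split; first exact: subsetT.
have eUT a b : eU setT a b = e a b by rewrite /eU !inE.
move=> x xS; case: (D x xS) => sg [Hst Hw]; exists sg.
have Leg : forall l, good setT P sg x l -> own (last x l) = P -> eU setT (last x l) (sg l).
  move=> l /good_path [s [-> ps]] ol; rewrite eUT /=; apply: Hst => //.
  by move: ps; rewrite (eq_path eUT).
split=> //.
- move=> l gl.
  pose f l := rcons l (if own (last x l) == P then sg l else xchoose (Hs (last x l))).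
  have Hf : forall l, good setT P sg x l ->
      [/\ good setT P sg x (f l), exists t, f l = l ++ t & size l < size (f l)].
    move=> l' gl'; split; last by rewrite /f size_rcons.
      rewrite /f; case: eqP => H; apply: goodS => //;
        try (by move=> H'; case: H); try exact: (Leg _ gl' H).
      by rewrite eUT; exact: xchooseP.
    by exists [:: (if own (last x l') == P then sg l' else xchoose (Hs (last x l')))]; rewrite cats1.
  case: (chain_play gl Hf) => v [v0 ed co Hk].
  have : is_play e v by move=> i; rewrite -eUT.
  move/(Hw v)/(_ v0 co) => [_ /(_ (size l).-1)].
  case: (Hk 0) => _ s0 /(_ (size l).-1) /=; rewrite prednK // => /(_ (leqnn _)) ->.
  by rewrite nth_last.
- by move=> v v0 ed co; case: (Hw v (fun i => (etrans (esym (eUT _ _)) (ed i))) v0 co).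
Qed.


Lemma limsup_ext (s s' : nat -> nat) m : (forall i, s i = s' i) -> limsup_is s m -> limsup_is s' m.
Proof.
move=> E [inf [N HN]]; split.
  by move=> M; case: (inf M) => i Mi si; exists i; rewrite -?E.
by exists N => i Ni; rewrite -E; apply: HN.
Qed.

Lemma Limsup_ext P (v v' : nat -> V) : (forall i, v i = v' i) -> Limsup_of pri P v -> Limsup_of pri P v'.
Proof.
move=> E; rewrite /Limsup_of /LimsupEven /LimsupOdd.
by case: P => -[m lm pm]; exists m => //; apply: (limsup_ext _ lm) => i /=; rewrite E.
Qed.

Lemma one_step (X : {set V}) Q sg x g : total X ->
  (forall l, good X Q sg x l -> own (last x l) = Q -> eU X (last x l) (sg l)) ->
  good X Q sg x g -> exists y, good X Q sg x (rcons g y).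
Proof.
move=> tX Leg gg; case: (eqVneq (own (last x g)) Q) => o.
  by exists (sg g); apply: goodS => //; apply: Leg.
case: (tX _ (good_last_in gg)) => z [zX ez]; exists z; apply: goodS => //.
  by rewrite /eU (good_last_in gg) zX ez.
by move=> o'; move: o; rewrite o' eqxx.
Qed.

Lemma descent (X N : {set V}) P sg x :
  (forall l, good X (~~ P) sg x l -> own (last x l) = ~~ P -> eU X (last x l) (sg l)) ->
  forall k g, good X (~~ P) sg x g -> last x g \in iter k (FA P X N) set0 ->
  exists m, good X (~~ P) sg x (g ++ m) /\ last x (g ++ m) \in N.
Proof.
move=> Leg; elim=> [|k IH] g gg; first by rewrite inE.
case/iter_FA_level=> [[yN _]|[yX H1 H2]]; first by exists [::]; rewrite cats0.
case: (eqVneq (own (last x g)) P) => o.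
  case: (H1 o) => z [zX ez zk].
  have gz : good X (~~ P) sg x (rcons g z).
    apply: goodS => //; first by rewrite /eU yX zX ez.
    by rewrite o => /eqP; case: (P).
  case: (IH _ gz) => [|m [gm lm]]; first by rewrite last_rcons.
  by exists (z :: m); rewrite -cat_rcons.
have o' : own (last x g) = ~~ P by move: o; case: (own _); case: (P).
have ed := Leg _ gg o'.
have gz : good X (~~ P) sg x (rcons g (sg g)) by apply: goodS.
case: (IH _ gz) => [|m [gm lm]].
  rewrite last_rcons; apply: H2 => //; by move: ed => /and3P[].
by exists (sg g :: m); rewrite -cat_rcons.
Qed.

Lemma key (X T : {set V}) P h : total X -> (forall y, y \in X -> pri y <= h) ->
  odd h = ~~ P -> Dom X (~~ P) T -> T != set0 ->
  exists Z, [/\ Z != set0, Z \subset T &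
     Dom (X :\: attr e own P X [set v in X | pri v == h]) (~~ P) Z].
Proof.
move=> tX ph oh [TX HT] /set0Pn [x xT].
set N := [set v in X | pri v == h]; set A := attr e own P X N; set H := X :\: A.
have HX : H \subset X by apply: subsetDl.
case: (HT x xT) => sg [Leg Safe Win].
have xX : x \in X := subsetP TX x xT.
case: (classic (exists u, good X (~~P) sg x u /\
    forall m, good X (~~P) sg x (u ++ m) -> last x (u ++ m) \notin A)) => [[u [gu Hu]] | Hneg].
- pose Z := [set z | pb (exists m, good X (~~P) sg x (u ++ m) /\ last x (u ++ m) = z)].
  have inZ : forall m, good X (~~P) sg x (u ++ m) -> last x (u ++ m) \in Z.
    by move=> m gm; rewrite inE; apply/pbP; exists m.
  have Zin : forall z, z \in Z -> exists m, good X (~~P) sg x (u ++ m) /\ last x (u ++ m) = z.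
    by move=> z; rewrite inE => /pbP.
  have ZH : Z \subset H.
    apply/subsetP=> z /Zin [m [gm <-]]; by rewrite inE (Hu _ gm) (good_last_in gm).
  exists Z; split.
  + apply/set0Pn; exists (last x u); move: (inZ [::]); rewrite cats0; exact.
  + by apply/subsetP=> z /Zin [m [gm <-]]; apply: Safe.
  + split=> // z /Zin [m [gm lm]].
    set w := u ++ m.
    have zZ : z \in Z by rewrite -lm; exact: inZ.
    have zH : z \in H := subsetP ZH _ zZ.
    exists (fun l => sg (w ++ behead l)).
    have shift : forall l, good H (~~P) (fun l => sg (w ++ behead l)) z l ->
        good X (~~P) sg x (w ++ behead l) /\ last x (w ++ behead l) = last z l.
      move=> l; elim=> [_ | l' y gl' [IH1 IH2] ed co]; first by rewrite /= cats0 /w lm; split.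
      case: (good_cons gl') => s El'.
      have -> : w ++ behead (rcons l' y) = rcons (w ++ behead l') y by rewrite El' /= rcons_cat.
      split; last by rewrite !last_rcons.
      apply: goodS => //; first by rewrite IH2; move: ed => /and3P[a b c];
        rewrite /eU c (subsetP HX _ a) (subsetP HX _ b).
      by move=> o; apply: co; rewrite -IH2.
    have ext : forall t, good X (~~P) sg x (w ++ t) -> last x (w ++ t) \in Z.
      by move=> t; rewrite /w -catA; apply: inZ.
    split.
    * move=> l gl ol; case: (shift l gl) => g1 g2.
      have L1 := Leg _ g1 (etrans (congr1 own g2) ol).
      have g3 := goodS g1 L1 (fun _ => erefl).
      have inz : sg (w ++ behead l) \in Z.
        by move: (ext (rcons (behead l) (sg (w ++ behead l)))); rewrite -rcons_cat last_rcons; apply.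
      rewrite /eU (good_last_in gl) (subsetP ZH _ inz) /=; move: L1 => /and3P[_ _]; by rewrite g2.
    * by move=> l gl; case: (shift l gl) => g1 <-; exact: ext.
    * move=> v v0 ed co.
      have gv := good_of_play v0 zH ed co.
      have K0 : 0 < size w by rewrite /w size_cat; case: (good_cons gu) => s ->.
      pose v' i := nth (v (i - (size w).-1)) w i.
      have Ev : forall n, mkseq v' (size w + n) = w ++ behead (mkseq v n.+1).
        move=> n; apply: (@eq_from_nth _ x).
          by rewrite size_mkseq size_cat size_behead size_mkseq.
        move=> i; rewrite size_mkseq => iK; rewrite nth_mkseq // /v' nth_cat.
        case: ltnP => Hi; first by apply: set_nth_default.
        rewrite nth_default // nth_behead nth_mkseq; last by lia.
        by congr v; lia.
      have gv' : forall n, good X (~~P) sg x (mkseq v' n.+1).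
        move=> n; have := (shift _ (gv n)).1; rewrite -Ev => gL.
        have sz : n.+1 <= size (mkseq v' (size w + n)) by rewrite size_mkseq; lia.
        rewrite (@mkseq_take v' (mkseq v' (size w + n)) x n.+1 sz); last first.
          by move=> i; rewrite size_mkseq => Hi; rewrite nth_mkseq.
        apply: (good_prefix gL (esym (cat_take_drop n.+1 _))).
        by rewrite -size_eq0 size_take_min (minn_idPl sz).
      case: (good_mkseq_play gv') => v'0 ed' co'.
      have W' := Limsup_shift (size w).-1 (Win v' v'0 ed' co').
      apply: (Limsup_ext _ W') => i /=; rewrite /v'.
      case: i => [|i].
        rewrite add0n subnn nth_last v0 -lm /w.
        by case: (good_cons gu) => s -> /=.
      rewrite nth_default; last by lia.
      by congr v; lia.
- have Hall : forall u, good X (~~P) sg x u ->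
      exists m, good X (~~P) sg x (u ++ m) /\ last x (u ++ m) \in A.
    move=> u gu; apply: NNPP => H1; apply: Hneg; exists u; split=> // m gm.
    apply/negP => inA; apply: H1; by exists m.
  have Hext : forall u, exists w, good X (~~P) sg x u ->
      [/\ good X (~~P) sg x w, exists t, w = u ++ t, size u < size w & last x w \in N].
    move=> u; case: (classic (good X (~~P) sg x u)) => gu; last by exists u.
    case: (one_step tX Leg gu) => y gy.
    case: (Hall _ gy) => m [gm lm].
    case: (in_attr_iter lm) => k lk.
    case: (descent Leg gm lk) => m' [gm' lm'].
    exists ((rcons u y ++ m) ++ m') => _; split=> //.
      by exists (y :: m ++ m'); rewrite -cats1 -!catA.
    by rewrite !size_cat size_rcons; lia.
  pose f u := proj1_sig (constructive_indefinite_description _ (Hext u)).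
  have Hf : forall u, good X (~~P) sg x u ->
      [/\ good X (~~P) sg x (f u), exists t, f u = u ++ t & size u < size (f u)].
    by move=> u gu; case: (proj2_sig (constructive_indefinite_description _ (Hext u)) gu) => a b c d; split.
  have fN : forall u, good X (~~P) sg x u -> last x (f u) \in N.
    by move=> u gu; case: (proj2_sig (constructive_indefinite_description _ (Hext u)) gu).
  have g0 : good X (~~P) sg x [:: x] by constructor.
  case: (chain_play g0 Hf) => v [v0 ed co Hk].
  have W := Win v v0 ed co.
  have vX : forall i, v i \in X by move=> i; move: (ed i) => /and3P[].
  have inf : forall M, exists i, M <= i /\ pri (v i) = h.
    move=> M; case: (Hk M.+1) => _ sz nthk; case: (Hk M) => gM _ _.
    exists (size (iter M.+1 f [:: x])).-1; split; first by move: sz; set L := iter _ _ _; lia.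
    rewrite nthk; last by move: sz; set L := iter _ _ _; lia.
    rewrite nth_last; move: (fN _ gM); rewrite inE => /andP[_ /eqP] //.
  have lim : forall m, limsup_is (fun i => pri (v i)) m -> m = h.
    by move=> m; apply: limsup_h => // i; apply: ph.
  move: W oh; rewrite /Limsup_of /LimsupEven /LimsupOdd.
  destruct P => /= -[m /lim -> pm] oh; by rewrite oh in pm.
Qed.

End Game.
End M4.
Import M4.

Module M6.
Section Game2.
Variables (V : finType) (e : rel V) (own : V -> bool) (pri : V -> nat).
Local Notation Dom := (Dom e own pri).
Local Notation total := (total e).
Local Notation good := (good e own).
Local Notation eU := (eU e).

Definition stepf P h' (X : {set V}) (b p : int) : {set V} * {set V} :=
  let H := X :\: attr e own P X [set v in X | pri v == h'.+1] in
  let W := solve e own pri (~~ P) h' H b p in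
  (X :\: attr e own (~~ P) X W, W).

Definition repf P h' (b p : int) :=
  fix rep (n : nat) (X : {set V}) {struct n} : {set V} :=
  match n with
  | 0 => X
  | n'.+1 => let XW := stepf P h' X b p in
             if XW.2 == set0 then XW.1 else rep n' XW.1
  end.

Lemma repf0 P h' b p X : repf P h' b p 0 X = X.
Proof. by []. Qed.

Lemma repfS P h' b p n X : repf P h' b p n.+1 X =
  if (stepf P h' X b p).2 == set0 then (stepf P h' X b p).1
  else repf P h' b p n (stepf P h' X b p).1.
Proof. by []. Qed.

Lemma solveS P h' (U : {set V}) p q : solve e own pri P h'.+1 U p q =
  if (U == set0) || (p <= 1)%R then set0 else
  let U2 := repf P h' (q %/ 2)%Z p #|V|.+1 U in
  let U3W3 := stepf P h' U2 q p in
  if U3W3.2 == set0 then U3W3.1 else repf P h' (q %/ 2)%Z p #|V|.+1 U3W3.1.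
Proof. exact_no_check (erefl (solve e own pri P h'.+1 U p q)). Qed.

End Game2.
End M6.
Import M6.

Module M7.
Section Game2.
Variables (V : finType) (e : rel V) (own : V -> bool) (pri : V -> nat).
Local Notation Dom := (M4.Dom e own pri).
Local Notation total := (M4.total e).
Local Notation good := (M4.good e own).
Local Notation eU := (M4.eU e).
Local Notation stepf := (stepf e own pri).
Local Notation repf := (repf e own pri).

Lemma solveS' P h' (U : {set V}) p q : solve e own pri P h'.+1 U p q =
  if (U == set0) || (p <= 1)%R then set0 else
  if (stepf P h' (repf P h' (q %/ 2)%Z p #|V|.+1 U) q p).2 == set0
  then (stepf P h' (repf P h' (q %/ 2)%Z p #|V|.+1 U) q p).1
  else repf P h' (q %/ 2)%Z p #|V|.+1 (stepf P h' (repf P h' (q %/ 2)%Z p #|V|.+1 U) q p).1.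
Proof. rewrite solveS. reflexivity. Qed.

Lemma stepf1 P h' X b p : (stepf P h' X b p).1 = X :\: attr e own (~~ P) X (stepf P h' X b p).2.
Proof. rewrite /stepf /=; reflexivity. Qed.
Lemma stepf2 P h' X b p : (stepf P h' X b p).2 =
  solve e own pri (~~ P) h' (X :\: attr e own P X [set v in X | pri v == h'.+1]) b p.
Proof. rewrite /stepf /=; reflexivity. Qed.

Lemma rep_sub P h' b p n X : repf P h' b p n X \subset X.
Proof.
elim: n X => [|n IH] X; rewrite ?repf0 ?repfS; first exact: subxx.
case: ifP => _; first exact: subsetDl.
by apply: subset_trans (IH _) _; apply: subsetDl.
Qed.

Lemma solve_sub P h (U : {set V}) p q : solve e own pri P h U p q \subset U.
Proof.
case: h => [|h']; first exact: sub0set.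
rewrite solveS'; case: ifP => _; first exact: sub0set.
have s1 X b : (stepf P h' X b p).1 \subset X by exact: subsetDl.
case: ifP => _.
  by apply: subset_trans (s1 _ _) _; apply: rep_sub.
apply: subset_trans; first exact: rep_sub.
by apply: subset_trans (s1 _ _) _; apply: rep_sub.
Qed.

Lemma rep_inv P h' b p (Inv : {set V} -> Prop) :
  (forall X, Inv X -> Inv (stepf P h' X b p).1) -> forall n X, Inv X -> Inv (repf P h' b p n X).
Proof.
move=> pres; elim=> [|n IH] X IX; rewrite ?repf0 ?repfS //; case: ifP => _; [exact: pres | exact: IH (pres _ IX)].
Qed.

Lemma rep_end P h' b p (Inv : {set V} -> Prop) :
  (forall X, Inv X -> Inv (stepf P h' X b p).1) -> (forall X, Inv X -> total X) ->
  forall n X, Inv X -> #|X| < n -> (stepf P h' (repf P h' b p n X) b p).2 = set0.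
Proof.
move=> pres tI; elim=> [|n IH] X IX cX; rewrite ?repf0 ?repfS //.
case: eqP => W0.
  by rewrite stepf1 W0 attr0 ?setD0 //; apply: tI.
apply: IH; first exact: pres.
have : (stepf P h' X b p).1 \proper X.
  apply/properP; split; first exact: subsetDl.
  case/set0Pn: (introN eqP W0) => w wW.
  have wX : w \in X.
    move: wW; rewrite stepf2 => /(subsetP (solve_sub _ _ _ _ _)); by rewrite inE => /andP[].
  exists w => //; rewrite stepf1 inE negb_and negbK.
  by rewrite (attr_N e own _ wW wX).
move/proper_card; lia.
Qed.

Lemma trap_in R (X N : {set V}) y z : y \in X :\: attr e own R X N -> own y = R ->
  z \in X -> e y z -> z \in X :\: attr e own R X N.
Proof.
rewrite !inE => /andP[yA yX] oy zX ez; rewrite zX andbT.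
exact: (attr_trap yX yA oy zX ez).
Qed.

End Game2.
End M7.
Import M7.

Module M8.
Section Game3.
Variables (V : finType) (e : rel V) (own : V -> bool) (pri : V -> nat).
Local Notation Dom := (M4.Dom e own pri).
Local Notation total := (M4.total e).
Local Notation stepf := (stepf e own pri).
Local Notation repf := (repf e own pri).

Theorem main (Hpos : forall v, 0 < pri v) (Hnl : forall v, ~~ e v v) h :
  forall P (U : {set V}) (p q : int), total U -> (forall y, y \in U -> pri y <= h) ->
  odd h = ~~ P -> forall S,
   (Dom U P S -> (#|S|%:Z <= p)%R -> S \subset solve e own pri P h U p q) /\
   (Dom U (~~ P) S -> (#|S|%:Z <= q)%R -> S :&: solve e own pri P h U p q = set0).
Proof.
elim: h => [|h' IH] P U p q tU ph oh S.
  split=> [[SU _] _ | _ _]; last by rewrite /= setI0.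
  apply/subsetP=> y yS; move: (Hpos y) (ph y (subsetP SU y yS)); by case: (pri y).
have oh' : odd h' = ~~ ~~ P by rewrite negbK; move: oh => /=; case: (odd h'); case: (P).
set b := (q %/ 2)%Z.
have HF : forall X : {set V}, X \subset U -> total X ->
   [/\ total (X :\: attr e own P X [set v in X | pri v == h'.+1]),
       (forall y, y \in X :\: attr e own P X [set v in X | pri v == h'.+1] -> pri y <= h') &
       X :\: attr e own P X [set v in X | pri v == h'.+1] \subset X].
  move=> X XU tX; split; [exact: total_diff | | exact: subsetDl].
  move=> y; rewrite inE => /andP[yA yX].
  have := ph y (subsetP XU y yX); rewrite leq_eqVlt ltnS; case/orP => // /eqP E.
  have : y \in attr e own P X [set v in X | pri v == h'.+1].
    by apply: attr_N => //; rewrite inE yX E eqxx.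
  by rewrite (negbTE yA).
have IHs : forall (X : {set V}) (bb : int), X \subset U -> total X -> forall Z,
   (Dom (X :\: attr e own P X [set v in X | pri v == h'.+1]) (~~ P) Z ->
       (#|Z|%:Z <= bb)%R -> Z \subset (stepf P h' X bb p).2) /\
   (Dom (X :\: attr e own P X [set v in X | pri v == h'.+1]) P Z ->
       (#|Z|%:Z <= p)%R -> Z :&: (stepf P h' X bb p).2 = set0).
  move=> X bb XU tX Z; case: (HF X XU tX) => tH pH _.
  case: (IH (~~ P) _ bb p tH pH oh' Z) => I1 I2; rewrite stepf2; split; first exact: I1.
  by rewrite negbK in I2.
rewrite solveS'.
case: ifP => [/orP [/eqP U0 | p1] | /negbT].
- split => [[SU _] _ | _ _]; last by rewrite setI0.
  by rewrite -U0.
- split=> [D cS | _ _]; last by rewrite setI0.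
  by rewrite (Dom_small Hnl tU D) ?sub0set //; lia.
rewrite negb_or => /andP [Un0 p1].
split.
+ move=> D cS.
  pose Inv (X : {set V}) := [/\ X \subset U, total X, S \subset X & Dom X P S].
  have pres : forall (bb : int) (X : {set V}), Inv X -> Inv (stepf P h' X bb p).1.
    move=> bb X [XU tX SX DX].
    case: (HF X XU tX) => tH pH HX.
    have trapH : forall y z, y \in S -> y \in X :\: attr e own P X [set v in X | pri v == h'.+1] ->
        own y = P -> z \in X -> e y z -> z \in S ->
        z \in X :\: attr e own P X [set v in X | pri v == h'.+1].
      by move=> y z _ yH oy zX ez _; exact: trap_in yH oy zX ez.
    have DH := Dom_restrict DX HX trapH.
    have cSH : (#|S :&: (X :\: attr e own P X [set v in X | pri v == h'.+1])|%:Z <= p)%R.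
      have := subset_leq_card (@subsetIl _ S (X :\: attr e own P X [set v in X | pri v == h'.+1])).
      move: cS; set k1 := #|_|; set k2 := #|_|; lia.
    have SHW := (IHs X bb XU tX _).2 DH cSH.
    have SW : S :&: (stepf P h' X bb p).2 = set0.
      apply/setP => y; rewrite in_setI in_set0; apply/negP => /andP [yS yW].
      have yH : y \in X :\: attr e own P X [set v in X | pri v == h'.+1].
        by move: yW; rewrite stepf2 => /(subsetP (solve_sub _ _ _ _ _ _ _ _)).
      by move/setP: SHW => /(_ y); rewrite in_setI in_setI yS yH yW in_set0.
    have SA := Dom_attr_disj DX SW.
    have SX1 : S \subset (stepf P h' X bb p).1.
      rewrite stepf1; apply/subsetP => y yS; rewrite in_setD (subsetP SX y yS) andbT.
      apply/negP => yA; move/setP: SA => /(_ y); by rewrite in_setI yS yA in_set0.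
    have X1X : (stepf P h' X bb p).1 \subset X by rewrite stepf1 subsetDl.
    split.
    * exact: subset_trans X1X XU.
    * rewrite stepf1; exact: total_diff.
    * exact: SX1.
    * have D1 := Dom_restrict DX X1X (fun y z _ _ _ _ _ zS => subsetP SX1 z zS).
      by rewrite (setIidPl SX1) in D1.
  have I0 : Inv U by split => //; case: D.
  have I2 := rep_inv (pres b) #|V|.+1 I0.
  case: ifP => _.
  * by case: (pres q _ I2).
  * by case: (rep_inv (pres b) #|V|.+1 (pres q _ I2)).
+ move=> D cS.
  pose Inv (X : {set V}) := [/\ X \subset U, total X & Dom X (~~ P) (S :&: X)].
  have pres : forall (bb : int) (X : {set V}), Inv X -> Inv (stepf P h' X bb p).1.
    move=> bb X [XU tX DX].
    have X1X : (stepf P h' X bb p).1 \subset X by rewrite stepf1 subsetDl.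
    split.
    * exact: subset_trans X1X XU.
    * rewrite stepf1; exact: total_diff.
    * have cond : forall y z, y \in S :&: X -> y \in (stepf P h' X bb p).1 -> own y = ~~ P ->
          z \in X -> e y z -> z \in S :&: X -> z \in (stepf P h' X bb p).1.
        by move=> y z _; rewrite stepf1 => yX1 oy zX ez _; exact: trap_in yX1 oy zX ez.
      have D1 := Dom_restrict DX X1X cond.
      by rewrite -setIA (setIidPr X1X) in D1.
  have keyapp : forall X : {set V}, Inv X -> S :&: X != set0 -> exists Z, [/\ Z != set0, Z \subset S :&: X &
      forall bb, (#|Z|%:Z <= bb)%R -> Z \subset (stepf P h' X bb p).2].
    move=> X [XU tX DX] T0.
    case: (key tX (fun y yX => ph y (subsetP XU y yX)) oh DX T0) => Z [Z0 ZT DZ].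
    by exists Z; split=> // bb cZ; exact: (IHs X bb XU tX Z).1 DZ cZ.
  have tI : forall X : {set V}, Inv X -> total X by move=> X [].
  have I0 : Inv U by split => //; rewrite (setIidPl (proj1 D)).
  have cardS : forall X : {set V}, #|S :&: X| <= #|S| by move=> X; apply: subset_leq_card; apply: subsetIl.
  set U2 := repf P h' b p #|V|.+1 U.
  have I2 : Inv U2 := rep_inv (pres b) _ I0.
  have E2 : (stepf P h' U2 b p).2 = set0.
    by apply: (rep_end (pres b) tI I0); rewrite ltnS max_card.
  case: (eqVneq (S :&: U2) set0) => T0.
  * have Rsub : (if (stepf P h' U2 q p).2 == set0 then (stepf P h' U2 q p).1
        else repf P h' b p #|V|.+1 (stepf P h' U2 q p).1) \subset U2.
      case: ifP => _; first by rewrite stepf1 subsetDl.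
      apply: subset_trans; first exact: rep_sub.
      by rewrite stepf1 subsetDl.
    apply/eqP; rewrite -subset0; apply: (subset_trans (setIS _ Rsub)); by rewrite T0.
  * case: (keyapp U2 I2 T0) => Z [Z0 ZT HZ].
    have Zb : ~ (#|Z|%:Z <= b)%R.
      move=> cZ; move: (HZ b cZ); rewrite E2 subset0 => /eqP Ze; by rewrite Ze eqxx in Z0.
    have cZT : #|Z| <= #|S :&: U2| := subset_leq_card ZT.
    have Zq : Z \subset (stepf P h' U2 q p).2.
      apply: HZ; move: (cardS U2) cS cZT; set k1 := #|_|; set k2 := #|_|; set k3 := #|_|; lia.
    case: ifP => [/eqP W3 | _].
      by move: Zq; rewrite W3 subset0 => /eqP Ze; rewrite Ze eqxx in Z0.
    set U3 := (stepf P h' U2 q p).1.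
    have I3 : Inv U3 := pres q _ I2.
    have U3U2 : U3 \subset U2 by rewrite /U3 stepf1 subsetDl.
    have ZU3 : (S :&: U3) :&: Z = set0.
      apply/setP => z; rewrite !in_setI in_set0; apply/negP => /andP [/andP [_ zU3] zZ].
      have zU2 : z \in U2 by move: (subsetP ZT z zZ); rewrite in_setI => /andP[].
      have zA : z \in attr e own (~~ P) U2 (stepf P h' U2 q p).2.
        by apply: attr_N => //; exact: (subsetP Zq).
      by move: zU3; rewrite /U3 stepf1 in_setD zA.
    have cU : #|S :&: U3| + #|Z| <= #|S :&: U2|.
      have sub : (S :&: U3) :|: Z \subset S :&: U2.
        rewrite subUset ZT andbT; exact: setIS U3U2.
      move: (subset_leq_card sub); rewrite cardsU ZU3 cards0 subn0 //.
    have cT3 : (#|S :&: U3|%:Z <= b)%R.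
      move: (cardS U2) cS cU Zb; set k1 := #|S :&: U3|; set k2 := #|Z|; set k3 := #|S :&: U2|; set k4 := #|S|; rewrite /b; lia.
    set R := repf P h' b p #|V|.+1 U3.
    have IR : Inv R := rep_inv (pres b) _ I3.
    have ER : (stepf P h' R b p).2 = set0.
      by apply: (rep_end (pres b) tI I3); rewrite ltnS max_card.
    have RU3 : R \subset U3 by apply: rep_sub.
    case: (eqVneq (S :&: R) set0) => // TR.
    case: (keyapp R IR TR) => Z' [Z'0 Z'T HZ'].
    have : (#|Z'|%:Z <= b)%R.
      have c1 : #|Z'| <= #|S :&: R| := subset_leq_card Z'T.
      have c2 : #|S :&: R| <= #|S :&: U3| by apply: subset_leq_card; apply: setIS.
      move: c1 c2 cT3; set k1 := #|Z'|; set k2 := #|S :&: R|; set k3 := #|S :&: U3|; lia.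
    move/HZ'; rewrite ER subset0 => /eqP Ze; by rewrite Ze eqxx in Z'0.
Qed.

End Game3.
End M8.
Import M8.

Theorem lemma1 (V : finType) (e : rel V) (own : V -> bool) (pri : V -> nat)
    (Hsucc : forall v, exists w, e v w)
    (Hnoloop : forall v, ~~ e v v)
    (Hpos : forall v, 0 < pri v)
    (h : nat) (Hh_even : ~~ odd h) (Hh_max : forall v, pri v <= h)
    (pE pO : int) :
  forall S : {set V},
    (dominion e own pri true S -> (#|S|%:Z <= pE)%R ->
       S \subset SolveE e own pri [set: V] h pE pO) /\
    (dominion e own pri false S -> (#|S|%:Z <= pO)%R ->
       S :&: SolveE e own pri [set: V] h pE pO = set0).
Proof.
move=> S.
have tT : M4.total e [set: V].
  by move=> y _; case: (Hsucc y) => w ew; exists w; rewrite inE.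
have oh : odd h = ~~ true by rewrite (negbTE Hh_even).
case: (@main V e own pri Hpos Hnoloop h true [set: V] pE pO tT (fun y _ => Hh_max y) oh S) => I1 I2.
rewrite /SolveE; split.
- move=> D c; apply: I1 => //; exact: Dom_of_dominion Hsucc D.
- move=> D c; apply: I2 => //; exact: Dom_of_dominion Hsucc D.
Qed.
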